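(* An element $f\in C(X)_\mathcal{P}$ is clean (i.e. $f=u+e$ with $u$ a unit and $e$ an idempotent of $C(X)_\mathcal{P}$) if and only if there exists a $\tau\mathcal{P}$-clopen subset $U$ of $X$ such that $f^{-1}(\{1\})\subseteq U\subseteq X\setminus Z_\mathcal{P}(f)$.
   Context: Let $(X,\tau)$ be a $T_1$ topological space and $\mathcal{P}$ an ideal of closed subsets of $X$ (a nonempty family of closed sets closed under finite unions and under taking closed subsets). For $f\colon X\to\mathbb{R}$, $D_f$ denotes the set of points of discontinuity of $f$, and $C(X)_\mathcal{P}=\{f\colon X\to\mathbb{R} : \overline{D_f}\in\mathcal{P}\}$, a commutative ring with unity under pointwise operations. For $f\in C(X)_\mathcal{P}$, $Z_\mathcal{P}(f)=\{x: f(x)=0\}$. A set $U\subseteq X$ is $\tau\mathcal{P}$-clopen if $U=Z_\mathcal{P}(f)=X\setminus Z_\mathcal{P}(g)$ for some $f,g\in C(X)_\mathcal{P}$. *)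

(* Defs.v *)
From HB Require Import structures.
From mathcomp Require Import all_boot all_order all_algebra.
From mathcomp Require Import all_classical all_reals all_analysis.
Set Implicit Arguments. Unset Strict Implicit. Unset Printing Implicit Defensive.
Import Order.TTheory GRing.Theory Num.Theory.
Import numFieldNormedType.Exports.
Local Open Scope classical_set_scope.
Local Open Scope ring_scope.

Definition closed_ideal {X : topologicalType} (P : set (set X)) : Prop :=
  [/\ P !=set0,
      (forall A, P A -> closed A),
      (forall A B, P A -> P B -> P (A `|` B)) &
      (forall A B, P A -> closed B -> B `<=` A -> P B)].

Definition discont {X : topologicalType} {R : realType} (f : X -> R) : set X :=
  [set x : X | ~ {for x, continuous (f : X -> R)}].

Definition CP {X : topologicalType} {R : realType} (P : set (set X)) (f : X -> R) : Prop :=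
  P (closure (discont f)).

Definition ZP {X : topologicalType} {R : realType} (f : X -> R) : set X :=
  [set x | f x = 0].

Definition CP_unit {X : topologicalType} {R : realType} (P : set (set X)) (u : X -> R) : Prop :=
  CP P u /\ exists v : X -> R, CP P v /\ (forall x, u x * v x = 1).

Definition CP_idempotent {X : topologicalType} {R : realType} (P : set (set X)) (e : X -> R) : Prop :=
  CP P e /\ (forall x, e x * e x = e x).

Definition CP_clean {X : topologicalType} {R : realType} (P : set (set X)) (f : X -> R) : Prop :=
  exists u e : X -> R, [/\ CP_unit P u, CP_idempotent P e & (forall x, f x = u x + e x)].

Definition tauP_clopen {X : topologicalType} {R : realType} (P : set (set X)) (U : set X) : Prop :=
  exists f g : X -> R, [/\ CP P f, CP P g, U = ZP f & U = ~` ZP g].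

(* Main.v *)
Require Import Defs.
From mathcomp Require Import all_boot all_order all_algebra.
From mathcomp Require Import all_classical all_reals all_analysis.
Import Order.TTheory GRing.Theory Num.Theory.
Import numFieldNormedType.Exports.
Local Open Scope classical_set_scope.
Local Open Scope ring_scope.

Lemma CP_of_sub (R : realType) (X : topologicalType) (P : set (set X))
  (hP : closed_ideal P) (h f1 f2 : X -> R) :
  CP P f1 -> CP P f2 ->
  discont h `<=` discont f1 `|` discont f2 -> CP P h.
Proof.
case: hP => _ _ hU hS H1 H2 hsub; rewrite /CP.
apply: (hS _ _ (hU _ _ H1 H2)); first exact: closed_closure.
have cl : closed (closure (discont f1) `|` closure (discont f2)).
  by apply: closedU; exact: closed_closure.
rewrite [X in _ `<=` X](closure_id _).1 //.
apply: closureS => x /hsub [] ?; [left|right]; exact: subset_closure.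
Qed.

Lemma discontB (R : realType) (X : topologicalType) (f g : X -> R) :
  discont (fun x => f x - g x) `<=` discont f `|` discont g.
Proof.
move=> x hx; apply: contrapT => hn; apply: hx.
have cf : {for x, continuous f} by apply: contrapT => c; apply: hn; left.
have cg : {for x, continuous g} by apply: contrapT => c; apply: hn; right.
exact: (cvgB cf cg).
Qed.

Lemma discontV (R : realType) (X : topologicalType) (u : X -> R) :
  (forall x, u x != 0) ->
  discont (fun x => (u x)^-1) `<=` discont u `|` discont u.
Proof.
move=> hu x hx; apply: contrapT => hn; apply: hx.
have cu : {for x, continuous u} by apply: contrapT => c; apply: hn; left.
exact: (cvgV (hu x) cu).
Qed.

Lemma discont1B (R : realType) (X : topologicalType) (e : X -> R) :
  discont (fun x => 1 - e x) `<=` discont e `|` discont e.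
Proof.
move=> x hx; apply: contrapT => hn; apply: hx.
have cu : {for x, continuous e} by apply: contrapT => c; apply: hn; left.
exact: (cvgB (cvg_cst (1:R)) cu).
Qed.

Arguments CP_of_sub {R X P} hP {h f1 f2}.
Arguments discontB {R X}.
Arguments discontV {R X}.
Arguments discont1B {R X}.

Theorem theorem3p4 (R : realType) (X : topologicalType) (P : set (set X))
  (hT1 : accessible_space X) (hP : closed_ideal P) (f : X -> R) (hf : CP P f) :
  CP_clean P f <->
  exists U : set X, @tauP_clopen X R P U /\ f @^-1` [set 1] `<=` U /\ U `<=` ~` ZP f.
Proof.
split.
- move=> [u [e [[hu [v [hv huv]]] [he hee] hfue]]].
  have e01 : forall x, e x = 0 \/ e x = 1.
    move=> x; have : e x * (e x - 1) = 0 by rewrite mulrBr mulr1 hee subrr.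
    move/eqP; rewrite mulf_eq0 subr_eq0 => /orP [] /eqP; by [left|right].
  have u0 : forall x, u x != 0.
    by move=> x; apply/eqP => h; move: (huv x); rewrite h mul0r => /eqP; rewrite eq_sym oner_eq0.
  exists (ZP e); split; [|split].
  + exists e, (fun x => 1 - e x); split => //.
      apply: (CP_of_sub hP he he); exact: discont1B.
    rewrite /ZP; apply/seteqP; split => x /=.
      by move=> ->; rewrite subr0 => /eqP; rewrite oner_eq0.
    by move=> h; case: (e01 x) => // h1; exfalso; apply: h; rewrite h1 subrr.
  + move=> x /= fx; rewrite /ZP /=; case: (e01 x) => // h1.
    move: fx; rewrite /= hfue h1 => h; move: (u0 x); by rewrite -(addrK 1 (u x)) h subrr eqxx.
  + move=> x; rewrite /ZP /= => ex fx.
    by move: fx; rewrite hfue ex addr0 => /eqP; rewrite (negbTE (u0 x)).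
- move=> [U [[g1 [g2 [hg1 hg2 U1 U2]]] [h1 h2]]].
  pose e := fun x => if pselect (U x) then 0 else 1 : R.
  have e0 : forall y, U y -> e y = 0 by move=> y Uy; rewrite /e; case: pselect.
  have e1 : forall y, ~ U y -> e y = 1 by move=> y Uy; rewrite /e; case: pselect.
  have he : CP P e.
    apply: (CP_of_sub hP hg1 hg2) => x hx; apply: contrapT => hn; apply: hx.
    have [Ux|Ux] := pselect (U x).
    + have cg : {for x, continuous g2} by apply: contrapT => c; apply: hn; right.
      have : g2 x != 0 by apply/eqP; move: Ux; rewrite U2 => Ux h; apply: Ux.
      move=> /(cvgr_neq0 _ cg) nr; apply: cvg_near_cst.
      near=> y; rewrite (e0 _ Ux); apply: e0; rewrite U2 => /eqP; apply/negP.
      by near: y.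
    + have cg : {for x, continuous g1} by apply: contrapT => c; apply: hn; left.
      have : g1 x != 0 by apply/eqP; rewrite U1 in Ux.
      move=> /(cvgr_neq0 _ cg) nr; apply: cvg_near_cst.
      near=> y; rewrite (e1 _ Ux); apply: e1; rewrite U1 => /eqP; apply/negP.
      by near: y.
  have u0 : forall x, f x - e x != 0.
    move=> x; have [Ux|Ux] := pselect (U x).
      by rewrite e0 // subr0; apply/eqP; exact: h2.
    by rewrite e1 // subr_eq0; apply/eqP => fx; apply: Ux; apply: h1.
  have hu : CP P (fun x => f x - e x) by exact: (CP_of_sub hP hf he (discontB f e)).
  exists (fun x => f x - e x), e; split.
  + split => //; exists (fun x => (f x - e x)^-1); split.
      exact: (CP_of_sub hP hu hu (discontV _ u0)).
    by move=> x; rewrite mulfV.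
  + split => // x; have [Ux|Ux] := pselect (U x).
      by rewrite (e0 _ Ux) mulr0.
    by rewrite (e1 _ Ux) mulr1.
  + by move=> x; rewrite subrK.
Unshelve. all: by end_near.
Qed.
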